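(* The $\mathbf k$-linear map $\varphi:\mathrm{WCQSym}\to\mathrm{QSym}$ defined on the basis by $\varphi(M_\alpha)=(-1)^{\ell_\varepsilon(\alpha)}M_{\bar\alpha}$ if $\alpha\in\mathcal C_N$ and $\varphi(M_\alpha)=0$ if $\alpha\in\mathcal C_\varepsilon$ is a surjective Hopf algebra homomorphism.
   Context: $\mathbf{k}$ is a commutative ring containing $\mathbb{Q}$. $\tilde{\mathbb N}=\mathbb N\cup\{\varepsilon\}$ with $0+\varepsilon=\varepsilon+\varepsilon=\varepsilon$ and $n+\varepsilon=n$ for integers $n\ge1$. $\mathbf{k}[[X]]_{\tilde{\mathbb N}}$, $X=\{x_1<x_2<\cdots\}$, is the algebra of possibly infinite linear combinations of formal monomials $\prod x_i^{f(x_i)}$, $f$ finitely supported $\tilde{\mathbb N}$-valued, $x^0=1$, multiplied by adding exponents in $\tilde{\mathbb N}$. An $\tilde{\mathbb N}$-composition is a finite (possibly empty) sequence $\alpha=(\alpha_1,\dots,\alpha_k)$ of elements of $\{\varepsilon,1,2,\dots\}$, $\ell(\alpha)=k$; $M_\alpha=\sum_{1\le i_1<\cdots<i_k}x_{i_1}^{\alpha_1}\cdots x_{i_k}^{\alpha_k}$, $M_\emptyset=1$. $\mathrm{WCQSym}$ is the $\mathbf k$-span of the (linearly independent) $M_\alpha$; it is a Hopf algebra with the power series product, coproduct $\Delta(M_{(\alpha_1,\dots,\alpha_k)})=\sum_{i=0}^kM_{(\alpha_1,\dots,\alpha_i)}\otimes M_{(\alpha_{i+1},\dots,\alpha_k)}$,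 counit $\epsilon(M_\alpha)=\delta_{\alpha,\emptyset}$, and antipode $S(M_\alpha)=(-1)^{\ell(\alpha)}\sum_{J\models\ell(\alpha)}M_{J\circ\alpha^r}$ (here $\alpha^r$ is the reversal, and for $J=(j_1,\dots,j_l)$ a sequence of positive integers summing to $\ell(\gamma)$, $J\circ\gamma$ sums consecutive blocks of $\gamma$ of sizes $j_1,\dots,j_l$ in $\tilde{\mathbb N}$). $\mathrm{QSym}$ is the span of the $M_\alpha$ with all entries positive integers, a Hopf algebra with the same formulas. $\ell_\varepsilon(\alpha)$ is the number of entries equal to $\varepsilon$; $\bar\alpha$ is $\alpha$ with its $\varepsilon$ entries deleted. $\mathcal C_\varepsilon$ is the set of $\tilde{\mathbb N}$-compositions whose first entry is $\varepsilon$; $\mathcal C_N$ is the set of all other $\tilde{\mathbb N}$-compositions (the empty one and those whose first entry is a positive integer). *)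

(* Defs.v *)
From HB Require Import structures.
From mathcomp Require Import all_boot all_algebra finmap.
From mathcomp Require Import monalg.

Set Implicit Arguments.
Unset Strict Implicit.
Unset Printing Implicit Defensive.

Import GRing.Theory.
Local Open Scope ring_scope.

(* The letters {eps, 1, 2, ...} of N~ (the nonzero elements of N~).     *)
(* [Pos n] stands for the positive integer n+1.                        *)
Inductive eN := Eps | Pos of nat.

Definition eN_to (x : eN) : option nat :=
  match x with Eps => None | Pos n => Some n end.
Definition eN_of (o : option nat) : eN :=
  match o with None => Eps | Some n => Pos n end.
Lemma eN_toK : cancel eN_to eN_of. Proof. by case. Qed.
HB.instance Definition _ := Countable.copy eN (can_type eN_toK).

Definition eadd (x y : eN) : eN :=
  match x, y with
  | Eps, Eps => Eps
  | Eps, Pos n => Pos n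
  | Pos m, Eps => Pos m
  | Pos m, Pos n => Pos (m + n).+1
  end.

Notation comp := (seq eN).

(* Quasi-shuffle (stuffle) of two compositions, as a list with
   multiplicities: M_u * M_v = sum_{w in qsh u v} M_w for the power series
   product (equal exponents on a common variable add up in N~). *)
Fixpoint qsh (u : comp) : comp -> seq comp :=
  match u with
  | [::] => fun v => [:: v]
  | a :: u' =>
      fix qsh_u (v : comp) : seq comp :=
        match v with
        | [::] => [:: a :: u']
        | b :: v' =>
            [seq a :: w | w <- qsh u' v] ++
            [seq b :: w | w <- qsh_u v'] ++
            [seq eadd a b :: w | w <- qsh u' v']
        end
  end.

Fixpoint words (k : nat) (A : seq nat) : seq (seq nat) :=
  match k with
  | 0 => [:: [::]]
  | k'.+1 => [seq a :: w | a <- A, w <- words k' A]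
  end.
Definition comps (n : nat) : seq (seq nat) :=
  [seq J <- flatten [seq words l (iota 1 n) | l <- iota 0 n.+1] | sumn J == n].

Definition bsum (g : comp) : eN :=
  match g with [::] => Eps | x :: xs => foldl eadd x xs end.

Fixpoint blocks (J : seq nat) (g : comp) : comp :=
  match J with
  | [::] => [::]
  | j :: J' => bsum (take j g) :: blocks J' (drop j g)
  end.

Section Hopf.
Variable k : comUnitRingType.

(* WCQSym, as the free k-module on the basis (M_alpha)_alpha. *)
Definition WC := {malg k[comp]}.
(* WCQSym (x) WCQSym, free on pairs (M_alpha (x) M_beta). *)
Definition WC2 := {malg k[(comp * comp)%type]}.

Definition M (a : comp) : WC := << a >>.
Definition M2 (a b : comp) : WC2 := << (a, b) >>.

Definition lin (K : choiceType) (V : lmodType k) (f : K -> V)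
  (x : {malg k[K]}) : V :=
  \sum_(a <- msupp x) x@_a *: f a.

Definition bilin (K1 K2 : choiceType) (V : lmodType k) (f : K1 -> K2 -> V)
  (x : {malg k[K1]}) (y : {malg k[K2]}) : V :=
  \sum_(a <- msupp x) \sum_(b <- msupp y) (x@_a * y@_b) *: f a b.

(* Product, unit, coproduct, counit, antipode of WCQSym (and, by
   restriction, of QSym). *)
Definition wmul (x y : WC) : WC :=
  bilin (fun a b => \sum_(c <- qsh a b) M c) x y.
Definition wunit : WC := M [::].
Definition tens (x y : WC) : WC2 := bilin M2 x y.
Definition wcop (x : WC) : WC2 :=
  lin (fun a : comp => \sum_(i < (size a).+1) M2 (take i a) (drop i a)) x.
Definition wcounit (x : WC) : k := x@_[::].
Definition wanti (x : WC) : WC :=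
  lin (fun a : comp =>
         (-1) ^+ size a *: \sum_(J <- comps (size a)) M (blocks J (rev a))) x.

Definition in_QSym (x : WC) : Prop :=
  forall a, a \in msupp x -> Eps \notin a.

Definition phi_basis (a : comp) : WC :=
  match a with
  | Eps :: _ => 0                                   (* alpha in C_eps *)
  | _ => (-1) ^+ count_mem Eps a *: M [seq e <- a | e != Eps]
  end.
Definition phi (x : WC) : WC := lin phi_basis x.

Definition phi2 (x : WC2) : WC2 :=
  lin (fun p : comp * comp => tens (phi (M p.1)) (phi (M p.2))) x.

End Hopf.

(* Main.v *)
Require Import Defs.
From HB Require Import structures.
From mathcomp Require Import all_boot all_algebra finmap.
From mathcomp Require Import monalg.

Set Implicit Arguments.
Unset Strict Implicit.
Unset Printing Implicit Defensive.
Import GRing.Theory.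

Lemma eaddA : associative eadd.
Proof.
case=> [|m] [|n] [|p] //=; congr Pos.
by rewrite addSn addnS addnA.
Qed.

Lemma bsum_cons2 x y s : bsum (x :: y :: s) = eadd x (bsum (y :: s)).
Proof.
rewrite /=; elim: s x y => [|z s IH] x y //=.
by rewrite -eaddA IH.
Qed.

Lemma mem_words l (A : seq nat) w : (w \in words l A) = (size w == l) && all (mem A) w.
Proof.
elim: l w => [|l IH] w; first by case: w.
apply/idP/idP.
- case/allpairsP => -[a w'] /= [ha hw ->].
  have hw2 : w' \in words l A := hw.
  by move: hw2; rewrite IH /= eqSS ha => /andP[-> ->].
- case: w => [|a w] //=; rewrite eqSS => /and3P[hs ha hw].
  apply/allpairsP; exists (a, w) => /=; split => //.
  by rewrite IH hs hw.
Qed.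

Lemma uniq_words l (A : seq nat) : uniq A -> uniq (words l A).
Proof.
move=> uA; elim: l => [|l IH] //=.
apply: allpairs_uniq => // -[a w] [a' w'] _ _ /= [-> ->] //.
Qed.

Lemma uniq_flatten_size (ls : seq nat) (f : nat -> seq (seq nat)) :
  uniq ls -> (forall l, uniq (f l)) -> (forall l w, w \in f l -> size w = l) ->
  uniq (flatten [seq f l | l <- ls]).
Proof.
move=> uls uf sz; elim: ls uls => [|l ls IH] //= /andP[hl uls].
rewrite cat_uniq uf IH // andbT; apply/hasPn => w /flattenP[s /mapP[l' hl' ->] hw].
apply/negP => hw'; move: hl; rewrite -(sz _ _ hw') (sz _ _ hw).
by rewrite hl'.
Qed.

Definition posc (J : seq nat) := all (fun j => 0 < j) J.

Lemma posc_size J : posc J -> size J <= sumn J.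
Proof.
elim: J => [|j J IH] //= /andP[hj hJ].
by rewrite -add1n leq_add // IH.
Qed.

Lemma posc_mem J j : j \in J -> j <= sumn J.
Proof.
elim: J => [|j' J IH] //=; rewrite inE => /orP[/eqP ->|/IH h].
  exact: leq_addr.
exact: leq_trans h (leq_addl _ _).
Qed.

Lemma mem_comps n J : (J \in comps n) = posc J && (sumn J == n).
Proof.
rewrite /comps mem_filter andbC; case: eqP => [<-|_]; rewrite ?andbT ?andbF //.
apply/idP/idP.
- case/flattenP => s /mapP[l _ ->]; rewrite mem_words => /andP[_ ha].
  apply/allP => j hj; have : j \in iota 1 (sumn J) := allP ha j hj; rewrite mem_iota.
  by case/andP.
- move=> hp; apply/flattenP; exists (words (size J) (iota 1 (sumn J))).
    apply/mapP; exists (size J) => //; rewrite mem_iota /= add0n ltnS.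
    exact: posc_size.
  rewrite mem_words eqxx /=; apply/allP => j hj; change (j \in iota 1 (sumn J)).
  rewrite mem_iota.
  by rewrite (allP hp j hj) /= add1n ltnS posc_mem.
Qed.

Lemma uniq_comps n : uniq (comps n).
Proof.
rewrite /comps filter_uniq //; apply: uniq_flatten_size.
- exact: iota_uniq.
- move=> l; apply: uniq_words; exact: iota_uniq.
- by move=> l w; rewrite mem_words => /andP[/eqP].
Qed.

Definition incrh (J : seq nat) := match J with [::] => [::] | j :: J' => j.+1 :: J' end.

Fixpoint cmp n : seq (seq nat) :=
  match n with
  | 0 => [:: [::]]
  | n'.+1 => [seq 1%N :: J | J <- cmp n'] ++ [seq incrh J | J <- cmp n' & J != [::]]
  end.

Lemma mem_cmp n J : (J \in cmp n) = posc J && (sumn J == n).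
Proof.
elim: n J => [|n IH] J.
  by case: J => [|[|j] J] //=; rewrite inE addSn andbF.
rewrite /= mem_cat; case: J => [|j J].
  apply/negbTE; rewrite negb_or; apply/andP; split.
    by apply/negP => /mapP[? _].
  by apply/negP; case/mapP => -[|a A]; rewrite mem_filter //= => _ [].
apply/idP/idP.
- case/orP => /mapP[J0].
    by move=> hJ0 [-> ->]; move: hJ0; rewrite IH /= add1n eqSS.
  rewrite mem_filter => /andP[_]; rewrite IH; case: J0 => [|j0 J0] //=.
  by move=> /andP[/andP[_ h1] h2] [-> ->]; rewrite /= h1 addSn eqSS h2.
- case: j => [|[|j]] //= /andP[hJ e].
    apply/orP; left; apply/mapP; exists J => //.
    by rewrite IH hJ; move: e; rewrite add1n eqSS => ->.
  apply/orP; right; apply/mapP; exists (j.+1 :: J) => //.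
  by rewrite mem_filter /= IH /= hJ; move: e; rewrite addSn eqSS => ->.
Qed.

Lemma uniq_cmp n : uniq (cmp n).
Proof.
elim: n => [|n IH] //=; rewrite cat_uniq; apply/and3P; split.
- by rewrite map_inj_uniq // => J1 J2 [].
- apply/hasPn => J /mapP[J0]; rewrite mem_filter => /andP[ne hJ0] ->.
  apply/negP => /mapP[J1 _]; case: J0 ne hJ0 => [|j0 J0] //= _.
  rewrite mem_cmp /= => /andP[/andP[hj0 _] _] [e _].
  by move: hj0; rewrite e.
- rewrite map_inj_in_uniq ?filter_uniq //.
  move=> [|a A] [|b B]; rewrite !mem_filter //= => _ _ [-> ->] //.
Qed.

Lemma perm_comps n : perm_eq (comps n) (cmp n).
Proof.
apply: uniq_perm; [exact: uniq_comps | exact: uniq_cmp|] => J.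
by rewrite mem_comps mem_cmp.
Qed.

Local Open Scope ring_scope.

Section Lin.
Variable k : comUnitRingType.

Definition islin (K : choiceType) (V : lmodType k) (F : {malg k[K]} -> V) :=
  forall (c : k) x y, F (c *: x + y) = c *: F x + F y.

Lemma linEw (K : choiceType) (V : lmodType k) (f : K -> V) (x : {malg k[K]}) d :
  (msupp x `<=` d)%fset -> lin f x = \sum_(a <- d) x@_a *: f a.
Proof.
move=> le; rewrite /lin (big_fset_incl _ le) // => a _ /mcoeff_outdom ->.
by rewrite scale0r.
Qed.

Lemma islin_lin (K : choiceType) (V : lmodType k) (f : K -> V) : islin (lin f).
Proof.
move=> c x y.
set d := (msupp x `|` msupp y `|` msupp (c *: x + y))%fset.
have h1 : (msupp x `<=` d)%fset by rewrite /d -fsetUA fsubsetUl.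
have h2 : (msupp y `<=` d)%fset.
  by rewrite /d -fsetUA; apply: fsubset_trans (fsubsetUl _ _) (fsubsetUr _ _).
have h3 : (msupp (c *: x + y) `<=` d)%fset by rewrite /d fsubsetUr.
rewrite (linEw _ h1) (linEw _ h2) (linEw _ h3) scaler_sumr -big_split /=.
apply: eq_bigr => a _; by rewrite mcoeffD mcoeffZ scalerDl scalerA.
Qed.

Section IsLin.
Variables (K : choiceType) (V : lmodType k) (F : {malg k[K]} -> V).
Hypothesis hF : islin F.
Lemma islin0 : F 0 = 0.
Proof.
have := hF 1 0 0; rewrite !scale1r !addr0 => /(congr1 (fun v => v - F 0)).
by rewrite subrr addrK => <-.
Qed.
Lemma islinD x y : F (x + y) = F x + F y.
Proof. by have := hF 1 x y; rewrite !scale1r. Qed.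
Lemma islinZ c x : F (c *: x) = c *: F x.
Proof. by have := hF c x 0; rewrite !addr0 islin0 addr0. Qed.
Lemma islinN x : F (- x) = - F x.
Proof. by rewrite -[- x]scaleN1r islinZ scaleN1r. Qed.
Lemma islinB x y : F (x - y) = F x - F y.
Proof. by rewrite islinD islinN. Qed.
Lemma islin_sum (I : Type) (r : seq I) (P : pred I) (G : I -> {malg k[K]}) :
  F (\sum_(i <- r | P i) G i) = \sum_(i <- r | P i) F (G i).
Proof.
elim: r => [|i r IH]; first by rewrite !big_nil islin0.
by rewrite !big_cons; case: (P i); rewrite ?islinD IH.
Qed.
End IsLin.

Lemma malgUZ (K : choiceType) (c : k) (a : K) : << c *g a >> = c *: << a >> :> {malg k[K]}.
Proof. by apply/malgP => b; rewrite mcoeffZ !mcoeffU mulr_natr. Qed.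

Lemma islin_ext (K : choiceType) (V : lmodType k) (F G : {malg k[K]} -> V) :
  islin F -> islin G -> (forall a, F << a >> = G << a >>) -> forall x, F x = G x.
Proof.
move=> hF hG e x; rewrite (monalgE x) (islin_sum hF) (islin_sum hG).
by apply: eq_bigr => a _; rewrite malgUZ (islinZ hF) (islinZ hG) e.
Qed.

Lemma linU (K : choiceType) (V : lmodType k) (f : K -> V) a : lin f << a >> = f a.
Proof. by rewrite /lin msuppU oner_eq0 big_seq_fset1 mcoeffU eqxx mulr1n scale1r. Qed.

Lemma islin_comp (K1 K2 : choiceType) (V : lmodType k) (F : {malg k[K2]} -> V)
  (G : {malg k[K1]} -> {malg k[K2]}) : islin F -> islin G -> islin (fun x => F (G x)).
Proof. by move=> hF hG c x y; rewrite hG hF. Qed.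

Lemma islin_add (K : choiceType) (V : lmodType k) (F G : {malg k[K]} -> V) :
  islin F -> islin G -> islin (fun x => F x + G x).
Proof.
move=> hF hG c x y; rewrite hF hG scalerDr.
by rewrite -!addrA; congr (_ + _); rewrite addrCA.
Qed.

Lemma islin_scale (K : choiceType) (V : lmodType k) (F : {malg k[K]} -> V) (d : k) :
  islin F -> islin (fun x => d *: F x).
Proof. by move=> hF c x y; rewrite hF scalerDr !scalerA mulrC. Qed.

Lemma bilinE (K1 K2 : choiceType) (V : lmodType k) (f : K1 -> K2 -> V) x y :
  bilin f x y = lin (fun a => lin (f a) y) x.
Proof.
rewrite /bilin /lin; apply: eq_bigr => a _; rewrite scaler_sumr.
by apply: eq_bigr => b _; rewrite scalerA.
Qed.

Lemma bilinE' (K1 K2 : choiceType) (V : lmodType k) (f : K1 -> K2 -> V) x y :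
  bilin f x y = lin (fun b => lin (f^~ b) x) y.
Proof.
rewrite /bilin /lin exchange_big; apply: eq_bigr => b _; rewrite scaler_sumr.
by apply: eq_bigr => a _; rewrite scalerA mulrC.
Qed.

Lemma islin_bilinl (K1 K2 : choiceType) (V : lmodType k) (f : K1 -> K2 -> V) y :
  islin (fun x => bilin f x y).
Proof. by move=> c x z; rewrite !bilinE islin_lin. Qed.
Lemma islin_bilinr (K1 K2 : choiceType) (V : lmodType k) (f : K1 -> K2 -> V) x :
  islin (bilin f x).
Proof. by move=> c y z; rewrite !bilinE' islin_lin. Qed.

Lemma bilinU (K1 K2 : choiceType) (V : lmodType k) (f : K1 -> K2 -> V) a b :
  bilin f << a >> << b >> = f a b.
Proof. by rewrite bilinE !linU. Qed.

Lemma islin_id (K : choiceType) : islin (fun x : {malg k[K]} => x).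
Proof. by []. Qed.
Lemma islin_mcoeff (K : choiceType) (a : K) : islin (fun x : {malg k[K]} => (x@_a : k^o)).
Proof. by move=> c x y; rewrite mcoeffD mcoeffZ. Qed.

End Lin.

Fact Mb_key : unit. Proof. exact: tt. Qed.
Fact L_key : unit. Proof. exact: tt. Qed.
Fact g_key : unit. Proof. exact: tt. Qed.
Fact wm_key : unit. Proof. exact: tt. Qed.
Fact tn_key : unit. Proof. exact: tt. Qed.
Fact M2_key : unit. Proof. exact: tt. Qed.
Fact wc_key : unit. Proof. exact: tt. Qed.
Fact ph2_key : unit. Proof. exact: tt. Qed.
Fact L2_key : unit. Proof. exact: tt. Qed.
Fact g2_key : unit. Proof. exact: tt. Qed.
Fact H_key : unit. Proof. exact: tt. Qed.
Fact E_key : unit. Proof. exact: tt. Qed.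
Fact wa_key : unit. Proof. exact: tt. Qed.

Section Alg.
Variable k : comUnitRingType.
Local Notation W := (WC k).

Definition Mb : seq eN -> W := locked_with Mb_key (M k).
Local Notation MM := Mb.
Lemma MbE a : Mb a = << a >>. Proof. by rewrite /Mb locked_withE. Qed.
Definition wm : W -> W -> W := locked_with wm_key (@wmul k).
Lemma wmE x y : wm x y = wmul x y. Proof. by rewrite /wm locked_withE. Qed.

Lemma islin_extM (V : lmodType k) (F G : W -> V) :
  islin F -> islin G -> (forall a, F (MM a) = G (MM a)) -> forall x, F x = G x.
Proof. move=> hF hG e; apply: islin_ext hF hG _ => a; by rewrite -MbE. Qed.

Lemma linM (V : lmodType k) (f : seq eN -> V) a : lin f (MM a) = f a.
Proof. by rewrite MbE linU. Qed.

Definition L : eN -> W -> W := locked_with L_key (fun x => lin (fun w => MM (x :: w))).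
Definition gb (w : seq eN) : W := (-1) ^+ count_mem Eps w *: MM [seq e <- w | e != Eps].
Definition g : W -> W := locked_with g_key (lin gb).
Definition phib (w : seq eN) : W :=
  match w with Eps :: _ => 0 | _ => (-1) ^+ count_mem Eps w *: MM [seq e <- w | e != Eps] end.

Lemma islin_L x : islin (L x). Proof. rewrite /L locked_withE; exact: islin_lin. Qed.
Lemma islin_g : islin g. Proof. rewrite /g locked_withE; exact: islin_lin. Qed.
Lemma islin_phi : islin (@phi k). Proof. exact: islin_lin. Qed.
Lemma islin_wmull y : islin (fun x : W => wm x y). Proof. move=> c x z; rewrite !wmE; exact: islin_bilinl. Qed.
Lemma islin_wmulr x : islin (wm x). Proof. move=> c y z; rewrite !wmE; exact: islin_bilinr. Qed.

Lemma LM x w : L x (MM w) = MM (x :: w). Proof. by rewrite /L locked_withE linM. Qed.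
Lemma gM w : g (MM w) = gb w. Proof. by rewrite /g locked_withE linM. Qed.
Lemma phiM w : phi (MM w) = phib w.
Proof. by rewrite /phi linM /phib /phi_basis; case: w => [|[|n] w] //; rewrite MbE. Qed.

Lemma wmulM u v : wm (MM u) (MM v) = \sum_(c <- qsh u v) MM c.
Proof. by rewrite wmE !MbE /wmul bilinU; apply: eq_bigr => c _; rewrite MbE. Qed.

Lemma qsh_nil_r u : qsh u [::] = [:: u].
Proof. by case: u. Qed.

Lemma wmul1M v : wm (MM [::]) (MM v) = MM v.
Proof. by rewrite wmulM /= big_seq1. Qed.
Lemma wmulM1 u : wm (MM u) (MM [::]) = MM u.
Proof. by rewrite wmulM qsh_nil_r big_seq1. Qed.

Lemma wmul1 y : wm (MM [::]) y = y.
Proof. move: y; apply: (islin_extM (islin_wmulr _) (@islin_id _ _)) => v; apply: wmul1M. Qed.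
Lemma wmulr1 x : wm x (MM [::]) = x.
Proof. move: x; apply: (islin_extM (islin_wmull _) (@islin_id _ _)) => u; apply: wmulM1. Qed.

Lemma wmul0 (y : W) : wm 0 y = 0. Proof. exact: (islin0 (islin_wmull y)). Qed.
Lemma wmulr0 (x : W) : wm x 0 = 0. Proof. exact: (islin0 (islin_wmulr x)). Qed.

Lemma L_sum x (s : seq (seq eN)) : L x (\sum_(c <- s) MM c) = \sum_(c <- s) MM (x :: c).
Proof. by rewrite (islin_sum (islin_L x)); apply: eq_bigr => c _; rewrite LM. Qed.

Lemma wmulMM_cons a u b v :
  wm (MM (a :: u)) (MM (b :: v)) =
  L a (wm (MM u) (MM (b :: v))) + L b (wm (MM (a :: u)) (MM v))
  + L (eadd a b) (wm (MM u) (MM v)).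
Proof.
rewrite !wmulM !L_sum.
have -> : qsh (a :: u) (b :: v) = [seq a :: w | w <- qsh u (b::v)] ++
            [seq b :: w | w <- qsh (a::u) v] ++
            [seq eadd a b :: w | w <- qsh u v] by [].
by rewrite !big_cat !big_map /= addrA.
Qed.

Lemma wmulLL a b X Y :
  wm (L a X) (L b Y) =
  L a (wm X (L b Y)) + L b (wm (L a X) Y) + L (eadd a b) (wm X Y).
Proof.
move: X; apply: islin_extM.
- exact: (islin_comp (islin_wmull _) (islin_L _)).
- apply: islin_add; last exact: (islin_comp (islin_L _) (islin_wmull _)).
  apply: islin_add; first exact: (islin_comp (islin_L _) (islin_wmull _)).
  exact: (islin_comp (islin_L _) (islin_comp (islin_wmull _) (islin_L _))).
move=> u; move: Y; apply: islin_extM.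
- exact: (islin_comp (islin_wmulr _) (islin_L _)).
- apply: islin_add; last exact: (islin_comp (islin_L _) (islin_wmulr _)).
  apply: islin_add; last exact: (islin_comp (islin_L _) (islin_wmulr _)).
  exact: (islin_comp (islin_L _) (islin_comp (islin_wmulr _) (islin_L _))).
by move=> v; rewrite !LM wmulMM_cons.
Qed.
Lemma gL_eps X : g (L Eps X) = - g X.
Proof.
move: X; apply: (islin_extM (islin_comp islin_g (islin_L _))).
  by move=> c x y; rewrite islin_g opprD scalerN.
move=> w; rewrite LM !gM /gb exprS mulN1r scaleNr; congr (- _).
Qed.

Lemma gL_pos n X : g (L (Pos n) X) = L (Pos n) (g X).
Proof.
move: X; apply: (islin_extM (islin_comp islin_g (islin_L _)) (islin_comp (islin_L _) islin_g)).
move=> w; rewrite LM !gM /gb /= add0n (islinZ (islin_L _)) LM //.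
Qed.

Lemma phiL_eps X : phi (L Eps X) = 0.
Proof.
move: X; apply: (islin_extM (islin_comp islin_phi (islin_L _))).
  by move=> c x y; rewrite scaler0 addr0.
by move=> w; rewrite LM phiM.
Qed.

Lemma phiL_pos n X : phi (L (Pos n) X) = L (Pos n) (g X).
Proof.
move: X; apply: (islin_extM (islin_comp islin_phi (islin_L _)) (islin_comp (islin_L _) islin_g)).
move=> w; rewrite LM phiM gM /gb /= add0n (islinZ (islin_L _)) LM //.
Qed.

Lemma phiM_nil : phi (MM [::]) = MM [::].
Proof. by rewrite phiM /= expr0 scale1r. Qed.
Lemma gM_nil : g (MM [::]) = MM [::].
Proof. by rewrite gM /gb /= expr0 scale1r. Qed.

Lemma wmulNl (x y : W) : wm (- x) y = - wm x y.
Proof. exact: (islinN (islin_wmull y)). Qed.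
Lemma wmulNr (x y : W) : wm x (- y) = - wm x y.
Proof. exact: (islinN (islin_wmulr x)). Qed.
Lemma wmulDl (x y z : W) : wm (x + y) z = wm x z + wm y z.
Proof. exact: (islinD (islin_wmull z)). Qed.
Lemma wmulDr (x y z : W) : wm x (y + z) = wm x y + wm x z.
Proof. exact: (islinD (islin_wmulr x)). Qed.
Lemma L0 x : L x 0 = 0. Proof. exact: (islin0 (islin_L x)). Qed.
Lemma LD x (y z : W) : L x (y + z) = L x y + L x z. Proof. exact: (islinD (islin_L x)). Qed.
Lemma gN (x : W) : g (- x) = - g x. Proof. exact: (islinN islin_g). Qed.
Lemma gD (x y : W) : g (x + y) = g x + g y. Proof. exact: (islinD islin_g). Qed.

Lemma gM_eps w : g (MM (Eps :: w)) = - g (MM w).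
Proof. by rewrite -LM gL_eps. Qed.
Lemma gM_pos n w : g (MM (Pos n :: w)) = L (Pos n) (g (MM w)).
Proof. by rewrite -LM gL_pos. Qed.


Lemma gmulM u v : g (wm (MM u) (MM v)) = wm (g (MM u)) (g (MM v)).
Proof.
elim: u v => [|a u IHu] v; first by rewrite wmul1M gM_nil wmul1.
elim: v => [|b v IHv]; first by rewrite wmulM1 gM_nil wmulr1.
rewrite wmulMM_cons !gD.
case: a IHv => [|m] IHv; case: b => [|n].
- rewrite [eadd _ _]/= !gL_eps !IHu IHv !gM_eps.
  rewrite !wmulNl !wmulNr !opprK.
  by rewrite -addrA addrN addr0.
- rewrite [eadd _ _]/= gL_eps !gL_pos IHu IHv !gM_eps gM_pos.
  by rewrite IHu !wmulNl -addrA -LD addNr L0 addr0.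
- rewrite [eadd _ _]/= gL_eps !gL_pos !IHu IHv !gM_eps gM_pos.
  by rewrite !wmulNr addrAC -LD addNr L0 add0r.
- by rewrite [eadd _ _]/= !gL_pos !IHu IHv !gM_pos wmulLL.
Qed.

Lemma phiD (x y : W) : phi (x + y) = phi x + phi y. Proof. exact: (islinD islin_phi). Qed.
Lemma phiM_eps w : phi (MM (Eps :: w)) = 0. Proof. by rewrite -LM phiL_eps. Qed.
Lemma phiM_pos n w : phi (MM (Pos n :: w)) = L (Pos n) (g (MM w)).
Proof. by rewrite -LM phiL_pos. Qed.

Lemma phimulM u v : phi (wm (MM u) (MM v)) = wm (phi (MM u)) (phi (MM v)).
Proof.
case: u => [|a u]; first by rewrite wmul1M phiM_nil wmul1.
case: v => [|b v]; first by rewrite wmulM1 phiM_nil wmulr1.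
rewrite wmulMM_cons !phiD.
case: a => [|m]; case: b => [|n].
- by rewrite [eadd _ _]/= !phiL_eps phiM_eps wmul0 !addr0.
- rewrite [eadd _ _]/= phiL_eps !phiL_pos !gmulM !gM_eps phiM_eps wmul0 add0r.
  by rewrite wmulNl -LD addNr L0.
- rewrite [eadd _ _]/= phiL_eps !phiL_pos !gmulM !gM_eps phiM_eps wmulr0 addr0.
  by rewrite wmulNr -LD addNr L0.
- by rewrite [eadd _ _]/= !phiL_pos !gmulM !gM_pos !phiM_pos wmulLL.
Qed.

Lemma phi_mul x y : phi (wm x y) = wm (phi x) (phi y).
Proof.
move: x; apply: islin_extM.
- exact: (islin_comp islin_phi (islin_wmull _)).
- exact: (islin_comp (islin_wmull _) islin_phi).
move=> u; move: y; apply: islin_extM.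
- exact: (islin_comp islin_phi (islin_wmulr _)).
- exact: (islin_comp (islin_wmulr _) islin_phi).
exact: phimulM.
Qed.

Local Notation W2 := (WC2 k).
Definition M2b : seq eN -> seq eN -> W2 := locked_with M2_key (M2 k).
Lemma M2bE a b : M2b a b = << (a, b) >>. Proof. by rewrite /M2b locked_withE. Qed.
Definition tn : W -> W -> W2 := locked_with tn_key (@tens k).
Lemma tnE x y : tn x y = tens x y. Proof. by rewrite /tn locked_withE. Qed.
Definition wc : W -> W2 := locked_with wc_key (@wcop k).
Lemma wcE x : wc x = wcop x. Proof. by rewrite /wc locked_withE. Qed.
Definition ph2 : W2 -> W2 := locked_with ph2_key (@phi2 k).
Lemma ph2E x : ph2 x = phi2 x. Proof. by rewrite /ph2 locked_withE. Qed.
Definition L2 : eN -> W2 -> W2 :=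
  locked_with L2_key (fun x => lin (fun p : seq eN * seq eN => M2b (x :: p.1) p.2)).
Definition g2 : W2 -> W2 :=
  locked_with g2_key (lin (fun p : seq eN * seq eN => tn (g (MM p.1)) (phi (MM p.2)))).

Lemma islin_extM2 (V : lmodType k) (F G : W2 -> V) :
  islin F -> islin G -> (forall a b, F (M2b a b) = G (M2b a b)) -> forall x, F x = G x.
Proof. move=> hF hG e; apply: islin_ext hF hG _ => -[a b]; by rewrite -M2bE. Qed.

Lemma islin_tnl y : islin (fun x => tn x y).
Proof. move=> c x z; rewrite !tnE; exact: islin_bilinl. Qed.
Lemma islin_tnr x : islin (tn x).
Proof. move=> c y z; rewrite !tnE; exact: islin_bilinr. Qed.
Lemma islin_wc : islin wc. Proof. move=> c x y; rewrite !wcE; exact: islin_lin. Qed.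
Lemma islin_ph2 : islin ph2. Proof. move=> c x y; rewrite !ph2E; exact: islin_lin. Qed.
Lemma islin_L2 x : islin (L2 x). Proof. rewrite /L2 locked_withE; exact: islin_lin. Qed.
Lemma islin_g2 : islin g2. Proof. rewrite /g2 locked_withE; exact: islin_lin. Qed.

Lemma tnM a b : tn (MM a) (MM b) = M2b a b.
Proof. by rewrite tnE !MbE /tens bilinU M2bE. Qed.
Lemma L2M x a b : L2 x (M2b a b) = M2b (x :: a) b.
Proof. by rewrite /L2 locked_withE M2bE linU. Qed.
Lemma g2M a b : g2 (M2b a b) = tn (g (MM a)) (phi (MM b)).
Proof. by rewrite /g2 locked_withE M2bE linU. Qed.
Lemma ph2M a b : ph2 (M2b a b) = tn (phi (MM a)) (phi (MM b)).
Proof. by rewrite ph2E M2bE /phi2 linU tnE !MbE. Qed.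
Lemma wcM a : wc (MM a) = \sum_(i < (size a).+1) M2b (take i a) (drop i a).
Proof. by rewrite wcE MbE /wcop linU; apply: eq_bigr => i _; rewrite M2bE. Qed.
Lemma wcM_nil : wc (MM [::]) = M2b [::] [::].
Proof. by rewrite wcM big_ord1. Qed.
Lemma wcM_cons x w : wc (MM (x :: w)) = M2b [::] (x :: w) + L2 x (wc (MM w)).
Proof.
rewrite !wcM big_ord_recl /= (islin_sum (islin_L2 x)); congr (_ + _).
by apply: eq_bigr => i _; rewrite L2M.
Qed.

Lemma tn0r (x : W) : tn x 0 = 0. Proof. exact: (islin0 (islin_tnr x)). Qed.
Lemma tnNl (x y : W) : tn (- x) y = - tn x y. Proof. exact: (islinN (islin_tnl y)). Qed.
Lemma wcN (x : W) : wc (- x) = - wc x. Proof. exact: (islinN islin_wc). Qed.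
Lemma wc0 : wc 0 = 0. Proof. exact: (islin0 islin_wc). Qed.
Lemma ph2D x y : ph2 (x + y) = ph2 x + ph2 y. Proof. exact: (islinD islin_ph2). Qed.
Lemma g2D x y : g2 (x + y) = g2 x + g2 y. Proof. exact: (islinD islin_g2). Qed.

Lemma tnL x A B : tn (L x A) B = L2 x (tn A B).
Proof.
move: A; apply: islin_extM.
- exact: (islin_comp (islin_tnl _) (islin_L _)).
- exact: (islin_comp (islin_L2 _) (islin_tnl _)).
move=> a; move: B; apply: islin_extM.
- exact: islin_tnr.
- exact: (islin_comp (islin_L2 _) (islin_tnr _)).
by move=> b; rewrite LM !tnM L2M.
Qed.

Lemma g2L_eps Z : g2 (L2 Eps Z) = - g2 Z.
Proof.
move: Z; apply: islin_extM2.
- exact: (islin_comp islin_g2 (islin_L2 _)).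
- by move=> c x y; rewrite islin_g2 opprD scalerN.
by move=> a b; rewrite L2M !g2M gM_eps tnNl.
Qed.

Lemma g2L_pos n Z : g2 (L2 (Pos n) Z) = L2 (Pos n) (g2 Z).
Proof.
move: Z; apply: islin_extM2.
- exact: (islin_comp islin_g2 (islin_L2 _)).
- exact: (islin_comp (islin_L2 _) islin_g2).
by move=> a b; rewrite L2M !g2M gM_pos tnL.
Qed.

Lemma ph2L_eps Z : ph2 (L2 Eps Z) = 0.
Proof.
move: Z; apply: islin_extM2.
- exact: (islin_comp islin_ph2 (islin_L2 _)).
- by move=> c x y; rewrite scaler0 addr0.
by move=> a b; rewrite L2M ph2M phiM_eps (islin0 (islin_tnl _)).
Qed.

Lemma ph2L_pos n Z : ph2 (L2 (Pos n) Z) = L2 (Pos n) (g2 Z).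
Proof.
move: Z; apply: islin_extM2.
- exact: (islin_comp islin_ph2 (islin_L2 _)).
- exact: (islin_comp (islin_L2 _) islin_g2).
by move=> a b; rewrite L2M ph2M g2M phiM_pos tnL.
Qed.

Lemma wcL x Y : wc (L x Y) = tn (MM [::]) (L x Y) + L2 x (wc Y).
Proof.
move: Y; apply: islin_extM.
- exact: (islin_comp islin_wc (islin_L _)).
- apply: islin_add; first exact: (islin_comp (islin_tnr _) (islin_L _)).
  exact: (islin_comp (islin_L2 _) islin_wc).
by move=> w; rewrite LM wcM_cons tnM.
Qed.

Lemma g2wc w : g2 (wc (MM w)) = wc (g (MM w)).
Proof.
elim: w => [|[|n] w IH].
- by rewrite wcM_nil g2M gM_nil phiM_nil tnM wcM_nil.
- by rewrite wcM_cons g2D g2L_eps IH g2M phiM_eps tn0r add0r gM_eps wcN.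
- by rewrite wcM_cons g2D g2L_pos IH g2M phiM_pos gM_nil gM_pos wcL.
Qed.

Lemma ph2wc w : ph2 (wc (MM w)) = wc (phi (MM w)).
Proof.
case: w => [|[|n] w].
- by rewrite wcM_nil ph2M phiM_nil tnM wcM_nil.
- by rewrite wcM_cons ph2D ph2L_eps ph2M !phiM_eps tn0r addr0 wc0.
- by rewrite wcM_cons ph2D ph2L_pos g2wc ph2M phiM_nil phiM_pos wcL.
Qed.

Lemma phi_cop (x : W) : phi2 (wcop x) = wcop (phi x).
Proof.
rewrite -wcE -ph2E -wcE; move: x; apply: islin_extM.
- exact: (islin_comp islin_ph2 islin_wc).
- exact: (islin_comp islin_wc islin_phi).
exact: ph2wc.
Qed.

Lemma phi_counit (x : W) : wcounit (phi x) = wcounit x.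
Proof.
rewrite /wcounit; move: x.
apply: (@islin_extM k^o (fun x => (phi x)@_[::] : k^o) (fun x => x@_[::] : k^o)).
- by move=> c x y; rewrite islin_phi mcoeffD mcoeffZ.
- exact: islin_mcoeff.
move=> a; rewrite phiM MbE mcoeffU; case: a => [|[|n] w] /=.
- by rewrite expr0 scale1r MbE mcoeffU.
- by rewrite mcoeff0.
- by rewrite mcoeffZ MbE mcoeffU mulr0n mulr0.
Qed.

Lemma noeps_aux (s : seq eN) : Eps \notin s ->
  count_mem Eps s = 0%N /\ [seq e <- s | e != Eps] = s.
Proof.
elim: s => [|x s IH] //=; rewrite inE negb_or => /andP[hx hs].
have [h1 h2] := IH hs; rewrite eq_sym (negbTE hx) h1 /=; split => //.
by rewrite h2.
Qed.

Lemma phi_basis_noeps a : Eps \notin a -> phi_basis k a = M k a.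
Proof.
move=> h; have [h1 h2] := noeps_aux h.
case: a h h1 h2 => [|[|n] w] //=.
- by move=> _ _ _; rewrite expr0 scale1r.
- by move=> _ -> ->; rewrite expr0 scale1r.
Qed.

Lemma msuppZM (c : k) s b : b \in msupp (c *: M k s) -> b = s.
Proof. move/(fsubsetP (msuppZ_le _ _)); by rewrite /M msuppU oner_eq0 in_fset1 => /eqP. Qed.

Lemma phi_QSym (x : W) : in_QSym (phi x).
Proof.
rewrite /phi /lin; apply: (big_ind (fun y : W => in_QSym y)).
- by move=> a; rewrite msupp0 in_fset0.
- move=> y z hy hz a /(fsubsetP (msuppD_le _ _)).
  by rewrite in_fsetU => /orP[/hy|/hz].
move=> a _ b /(fsubsetP (msuppZ_le _ _)).
case: a => [|[|n] w] /=.
- by move/msuppZM ->.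
- by rewrite msupp0 in_fset0.
- by move/msuppZM -> ; rewrite inE /= mem_filter eqxx.
Qed.

Lemma phi_QSym_id (y : W) : in_QSym y -> phi y = y.
Proof.
move=> hy; rewrite {2}(monalgE y) /phi /lin.
apply: eq_big_seq => a ha; rewrite malgUZ phi_basis_noeps //.
exact: hy.
Qed.

Definition T (b : seq eN) : W := \sum_(J <- comps (size b)) MM (blocks J b).
Definition Hb (x : eN) (w : seq eN) : W :=
  match w with [::] => 0 | y :: w' => MM (eadd x y :: w') end.
Definition Eb (w : seq eN) : W := match w with Eps :: _ => MM w | _ => 0 end.
Definition H : eN -> W -> W := locked_with H_key (fun x => lin (Hb x)).
Definition E : W -> W := locked_with E_key (lin Eb).
Definition wa : W -> W := locked_with wa_key (@wanti k).

Lemma waE x : wa x = wanti x. Proof. by rewrite /wa locked_withE. Qed.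
Lemma islin_H x : islin (H x). Proof. rewrite /H locked_withE; exact: islin_lin. Qed.
Lemma islin_E : islin E. Proof. rewrite /E locked_withE; exact: islin_lin. Qed.
Lemma islin_wa : islin wa. Proof. rewrite /wa locked_withE; exact: islin_lin. Qed.
Lemma HM x w : H x (MM w) = Hb x w. Proof. by rewrite /H locked_withE linM. Qed.
Lemma EM w : E (MM w) = Eb w. Proof. by rewrite /E locked_withE linM. Qed.

Lemma waM a : wa (MM a) = (-1) ^+ size a *: T (rev a).
Proof.
rewrite /wa locked_withE MbE /wanti linU /T size_rev; congr (_ *: _).
by apply: eq_bigr => J _; rewrite MbE.
Qed.

Lemma T_nil : T [::] = MM [::].
Proof. by rewrite /T (_ : comps 0 = [:: [::]]) // big_seq1. Qed.

Lemma T_cmp b : T b = \sum_(J <- cmp (size b)) MM (blocks J b).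
Proof. by rewrite /T (perm_big _ (perm_comps _)). Qed.

Lemma T_cons x b : T (x :: b) = L x (T b) + H x (T b).
Proof.
rewrite !T_cmp /= big_cat /= !big_map (islin_sum (islin_L x)) (islin_sum (islin_H x)).
congr (_ + _); first by apply: eq_bigr => J _; rewrite LM /= take0 drop0.
rewrite big_filter big_mkcond /=; apply: eq_big_seq => J hJ.
case: J hJ => [|j J] /=; first by rewrite HM.
rewrite mem_cmp /= => /andP[/andP[hj _] /eqP hs].
rewrite HM /=; congr (MM (_ :: _)).
case: b hs => [|y b] /=; first by case: j hj.
by case: j hj => [|j] //= _ _; exact: bsum_cons2.
Qed.

Lemma HL x y Z : H x (L y Z) = L (eadd x y) Z.
Proof.
move: Z; apply: islin_extM.
- exact: (islin_comp (islin_H _) (islin_L _)).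
- exact: islin_L.
by move=> w; rewrite LM HM LM.
Qed.

Lemma g0 : g 0 = 0. Proof. exact: (islin0 islin_g). Qed.
Lemma phi0 : phi (0 : W) = 0. Proof. exact: (islin0 islin_phi). Qed.
Lemma H0 x : H x 0 = 0. Proof. exact: (islin0 (islin_H x)). Qed.
Lemma LN x (Y : W) : L x (- Y) = - L x Y. Proof. exact: (islinN (islin_L x)). Qed.
Lemma phiN (Y : W) : phi (- Y) = - phi Y. Proof. exact: (islinN islin_phi). Qed.

Lemma phiH_pos n Y : phi (H (Pos n) Y) = H (Pos n) (phi Y) - L (Pos n) (g (E Y)).
Proof.
move: Y; apply: islin_extM.
- exact: (islin_comp islin_phi (islin_H _)).
- apply: islin_add; first exact: (islin_comp (islin_H _) islin_phi).
  apply: (islin_comp (F := fun z => - z)); first by move=> c x y; rewrite opprD scalerN.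
  exact: (islin_comp (islin_L _) (islin_comp islin_g islin_E)).
move=> [|[|m] w]; rewrite HM EM /=.
- by rewrite phi0 phiM_nil HM /= g0 L0 subrr.
- by rewrite phiM_eps H0 gM_eps LN opprK add0r phiM_pos.
- by rewrite !phiM_pos HL g0 L0 subr0.
Qed.

Lemma gPE Y : g Y = phi Y + g (E Y).
Proof.
move: Y; apply: islin_extM; first exact: islin_g.
  apply: islin_add; first exact: islin_phi.
  exact: (islin_comp islin_g islin_E).
move=> [|[|m] w]; rewrite EM /=.
- by rewrite gM_nil phiM_nil g0 addr0.
- by rewrite phiM_eps add0r.
- by rewrite gM_pos phiM_pos g0 addr0.
Qed.

Lemma islin_c0 : islin (fun Y : W => Y@_[::] *: MM [::]).
Proof. by move=> c x y; rewrite mcoeffD mcoeffZ scalerDl scalerA. Qed.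

Lemma phiH_eps Y : phi (H Eps Y) = phi Y - Y@_[::] *: MM [::].
Proof.
move: Y; apply: islin_extM.
- exact: (islin_comp islin_phi (islin_H _)).
- apply: islin_add; first exact: islin_phi.
  apply: (islin_comp (F := fun z => - z)); first by move=> c x y; rewrite opprD scalerN.
  exact: islin_c0.
move=> [|[|m] w]; rewrite HM /= MbE mcoeffU /= ?mulr0n ?scale0r ?subr0.
- by rewrite phi0 -MbE phiM_nil mulr1n scale1r subrr.
- by rewrite -MbE.
- by rewrite -MbE.
Qed.

Lemma L_coef0 x (Y : W) : (L x Y)@_[::] = 0.
Proof.
move: Y; apply: (@islin_extM k^o (fun Y => (L x Y)@_[::] : k^o) (fun _ => 0 : k^o)).
- by move=> c a b; rewrite islin_L mcoeffD mcoeffZ.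
- by move=> c a b; rewrite scaler0 addr0.
by move=> w; rewrite LM MbE mcoeffU.
Qed.

Lemma H_coef0 x (Y : W) : (H x Y)@_[::] = 0.
Proof.
move: Y; apply: (@islin_extM k^o (fun Y => (H x Y)@_[::] : k^o) (fun _ => 0 : k^o)).
- by move=> c a b; rewrite islin_H mcoeffD mcoeffZ.
- by move=> c a b; rewrite scaler0 addr0.
by move=> [|y w]; rewrite HM /= ?mcoeff0 // MbE mcoeffU.
Qed.

Definition cnd (b : seq eN) := (b == [::]) || (last Eps b != Eps).

Lemma phiT b : phi (T b) = if cnd b then T [seq e <- b | e != Eps] else 0.
Proof.
elim: b => [|x b IH]; first by rewrite T_nil phiM_nil /cnd /= -T_nil.
case: b IH => [|y b] IH.
  rewrite T_cons T_nil HM /= addr0 LM; case: x => [|n].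
    by rewrite phiM_eps.
  by rewrite phiM_pos gM_nil LM /cnd /= T_cons T_nil LM HM addr0.
have cE : cnd [:: x, y & b] = cnd (y :: b) by [].
rewrite cE T_cons phiD; case: x {cE} => [|n].
  rewrite phiL_eps add0r phiH_eps.
  have hc : (T (y :: b))@_[::] = 0 by rewrite T_cons mcoeffD L_coef0 H_coef0 addr0.
  by rewrite hc scale0r subr0 IH.
rewrite phiL_pos phiH_pos (gPE (T (y :: b))) LD addrA.
rewrite (addrAC (L (Pos n) (phi (T (y :: b))))) addrK IH; case: ifP => _.
  by rewrite [X in _ = T X]/= T_cons.
by rewrite L0 H0 addr0.
Qed.

Lemma size_split (s : seq eN) : size s = (count_mem Eps s + size [seq e <- s | e != Eps])%N.
Proof. by elim: s => [|[|n] s IH] //=; rewrite IH ?add0n ?addnS. Qed.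

Lemma phi_anti (x : W) : phi (wa x) = wa (phi x).
Proof.
move: x; apply: islin_extM.
- exact: (islin_comp islin_phi islin_wa).
- exact: (islin_comp islin_wa islin_phi).
move=> a; rewrite waM (islinZ islin_phi) phiT phiM.
case: a => [|[|n] w].
- rewrite /cnd /= T_nil expr0 scale1r waM /= expr0 scale1r.
  by rewrite (_ : rev [::] = [::]) // T_nil.
- have -> : cnd (rev (Eps :: w)) = false.
    by rewrite /cnd rev_cons last_rcons /= orbF; case: (rev w).
  by rewrite scaler0 /phib (islin0 islin_wa).
- have -> : cnd (rev (Pos n :: w)) = true.
    by rewrite /cnd rev_cons last_rcons /= orbT.
  rewrite /phib (islinZ islin_wa) waM scalerA -exprD -size_split.
  by rewrite filter_rev.
Qed.

End Alg.

Theorem theorem3p8 (k : comUnitRingType)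
  (hQ : forall n : nat, (n.+1)%:R \is a @GRing.unit k) :
  (* phi takes values in QSym and is onto QSym *)
  (forall x : WC k, in_QSym (phi x)) /\
  (forall y : WC k, in_QSym y -> exists x : WC k, phi x = y) /\
  (* algebra morphism *)
  (forall x y : WC k, phi (wmul x y) = wmul (phi x) (phi y)) /\
  phi (wunit k) = wunit k /\
  (* coalgebra morphism *)
  (forall x : WC k, phi2 (wcop x) = wcop (phi x)) /\
  (forall x : WC k, wcounit (phi x) = wcounit x) /\
  (* compatibility with the antipodes *)
  (forall x : WC k, phi (wanti x) = wanti (phi x)).
Proof.
split; first exact: phi_QSym.
split; first by move=> y hy; exists y; exact: phi_QSym_id.
split; first by move=> x y; rewrite -!wmE phi_mul.
have e : M k [::] = Mb k [::] by rewrite MbE.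
split; first by rewrite /wunit e phiM_nil.
split; first exact: phi_cop.
split; first exact: phi_counit.
by move=> x; rewrite -!waE phi_anti.
Qed.
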